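(* Let $f:\mathbb R^n\to\mathbb R$ be continuously differentiable, $A\in\mathbb R^{q\times n}$, $b\in\mathbb R^q$, and $c=(c_1,\dots,c_p):\mathbb R^n\to\mathbb R^p$ with each $c_i$ concave and twice continuously differentiable. For each $\varepsilon>0$ let $(x(\varepsilon),y(\varepsilon),z^I(\varepsilon))\in\mathbb R^{n+q+2p}$ be a stationary point of $\mathrm P_\varepsilon$ with multiplier $\lambda(\varepsilon)\in\mathbb R^n$. Let $(x^*,y^*,[z^I]^*,\lambda^* )$ be any point of $\limsup_{\varepsilon\searrow0}\{(x(\varepsilon),y(\varepsilon),z^I(\varepsilon),\lambda(\varepsilon))\}$, and let $\beta=\{i:[y^I]^*_i=0=[z^I]^*_i\}$, $\gamma=\{i:[y^I]^*_i>0=[z^I]^*_i\}$. Then there exists $\eta_\beta\in[0,1]^{|\beta|}$ such that $$\nabla f(x^* )+\Big[\sum_{j=1}^p[y^I]^*_j\nabla^2c_j(x^* )-A^TA-\mathcal Jc_\gamma(x^* )^T\mathcal Jc_\gamma(x^* )-\mathcal Jc_\beta(x^* )^T\mathrm{Diag}(\eta_\beta)\mathcal Jc_\beta(x^* )\Big]\lambda^*=0.$$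
   Context: $\mathcal Jc(x)$ is the $p\times n$ Jacobian of $c$; for an index set $\beta$, $c_\beta=(c_i)_{i\in\beta}$ with Jacobian $\mathcal Jc_\beta$. $G(x,y,z^I)=\big(A^Ty^E+\mathcal Jc(x)^Ty^I,\ Ax-b+y^E,\ c(x)+y^I-z^I\big)$, $y=(y^E,y^I)\in\mathbb R^q\times\mathbb R^p$. $\psi_\varepsilon(a,b)=a+b-\sqrt{a^2+b^2+2\varepsilon^2}$, $\Psi_\varepsilon(y^I,z^I)=(\psi_\varepsilon(y^I_i,z^I_i))_{i=1}^p$, $\Theta(\varepsilon)=\{(y^I,z^I):\Psi_\varepsilon(y^I,z^I)=0\}$, and $\mathcal J_{z^I}\Psi_\varepsilon(y^I,z^I)=\mathrm{Diag}\big(1-z^I_i/\sqrt{(y^I_i)^2+(z^I_i)^2+2\varepsilon^2}\big)$. Problem $\mathrm P_\varepsilon$ is $\min f(x)$ s.t. $G(x,y,z^I)=0$, $(y^I,z^I)\in\Theta(\varepsilon)$. A feasible point $(x,y,z^I)$ of $\mathrm P_\varepsilon$ is a stationary point of $\mathrm P_\varepsilon$ with multiplier $\lambda\in\mathbb R^n$ if $\nabla f(x)+\big[\sum_{i=1}^p y^I_i\nabla^2c_i(x)-A^TA-\mathcal Jc(x)^T\mathcal J_{z^I}\Psi_\varepsilon(y^I,z^I)\mathcal Jc(x)\big]\lambda=0$. $\mathrm{Diag}(v)$ is the diagonal matrix with diagonal $v$. *)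

(* Defs.v *)
From HB Require Import structures.
From mathcomp Require Import all_boot all_order all_algebra.
From mathcomp Require Import all_classical all_reals all_analysis.
Export numFieldNormedType.Exports.
Import Order.TTheory GRing.Theory Num.Theory.
Set Implicit Arguments. Unset Strict Implicit. Unset Printing Implicit Defensive.
Local Open Scope classical_set_scope.
Local Open Scope ring_scope.

Section Defs.
Variable R : realType.

Definition partial {n : nat} (g : 'cV[R]_n -> R) (i : 'I_n) (x : 'cV[R]_n) : R :=
  'D_(delta_mx i 0) g x.

Definition grad {n : nat} (g : 'cV[R]_n -> R) (x : 'cV[R]_n) : 'cV[R]_n :=
  \col_i partial g i x.

Definition hess {n : nat} (g : 'cV[R]_n -> R) (x : 'cV[R]_n) : 'M[R]_n :=
  \matrix_(i, j) partial (partial g j) i x.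

Definition C1 {n : nat} (g : 'cV[R]_n -> R) : Prop :=
  (forall x, differentiable g x) /\ (forall i, continuous (partial g i)).

Definition C2 {n : nat} (g : 'cV[R]_n -> R) : Prop :=
  C1 g /\ (forall i, C1 (partial g i)).

Definition concave {n : nat} (g : 'cV[R]_n -> R) : Prop :=
  forall (x y : 'cV[R]_n) (t : R), 0 <= t <= 1 ->
    t * g x + (1 - t) * g y <= g (t *: x + (1 - t) *: y).

Definition cval {n p : nat} (c : 'I_p -> 'cV[R]_n -> R) (x : 'cV[R]_n) : 'cV[R]_p :=
  \col_i c i x.

Definition Jac {n p : nat} (c : 'I_p -> 'cV[R]_n -> R) (x : 'cV[R]_n) : 'M[R]_(p, n) :=
  \matrix_(i, j) partial (c i) j x.

(* Jc_S(x): rows of Jc(x) indexed by S (in increasing order) *)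
Definition subJac {n p : nat} (S : {set 'I_p}) (c : 'I_p -> 'cV[R]_n -> R)
    (x : 'cV[R]_n) : 'M[R]_(#|S|, n) :=
  rowsub (fun k : 'I_#|S| => enum_val k) (Jac c x).

Definition psi_eps (eps a b : R) : R :=
  a + b - Num.sqrt (a ^+ 2 + b ^+ 2 + 2 * eps ^+ 2).

Definition Psi_eps {p : nat} (eps : R) (yI zI : 'cV[R]_p) : 'cV[R]_p :=
  \col_i psi_eps eps (yI i 0) (zI i 0).

Definition in_Theta {p : nat} (eps : R) (yI zI : 'cV[R]_p) : Prop :=
  Psi_eps eps yI zI = 0.

Definition JzPsi {p : nat} (eps : R) (yI zI : 'cV[R]_p) : 'M[R]_p :=
  diag_mx (\row_i (1 - zI i 0 / Num.sqrt (yI i 0 ^+ 2 + zI i 0 ^+ 2 + 2 * eps ^+ 2))).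

(* G(x, y, zI) = 0, with y = (yE, yI) *)
Definition G_zero {n q p : nat} (A : 'M[R]_(q, n)) (b : 'cV[R]_q)
    (c : 'I_p -> 'cV[R]_n -> R) (x : 'cV[R]_n) (yE : 'cV[R]_q)
    (yI zI : 'cV[R]_p) : Prop :=
  [/\ A^T *m yE + (Jac c x)^T *m yI = 0,
      A *m x - b + yE = 0 &
      cval c x + yI - zI = 0].

Definition feasible_P {n q p : nat} (eps : R) (A : 'M[R]_(q, n)) (b : 'cV[R]_q)
    (c : 'I_p -> 'cV[R]_n -> R) (x : 'cV[R]_n) (yE : 'cV[R]_q)
    (yI zI : 'cV[R]_p) : Prop :=
  G_zero A b c x yE yI zI /\ in_Theta eps yI zI.

Definition stationary_P {n q p : nat} (eps : R) (f : 'cV[R]_n -> R)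
    (A : 'M[R]_(q, n)) (b : 'cV[R]_q) (c : 'I_p -> 'cV[R]_n -> R)
    (x : 'cV[R]_n) (yE : 'cV[R]_q) (yI zI : 'cV[R]_p) (lam : 'cV[R]_n) : Prop :=
  feasible_P eps A b c x yE yI zI /\
  grad f x + (\sum_(i < p) yI i 0 *: hess (c i) x - A^T *m A
              - (Jac c x)^T *m JzPsi eps yI zI *m Jac c x) *m lam = 0.

End Defs.

(* Main.v *)
Require Import Defs.
From HB Require Import structures.
From mathcomp Require Import all_boot all_order all_algebra.
From mathcomp Require Import all_classical all_reals all_analysis.
From mathcomp Require Import lra ring.
Import Order.TTheory GRing.Theory Num.Theory numFieldNormedType.Exports.
Local Open Scope classical_set_scope.
Local Open Scope ring_scope.

Lemma incr_ge {f : nat -> nat} : increasing_seq f -> forall n, (n <= f n)%N.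
Proof.
move=> hf; elim=> // n IH.
have : (f n < f n.+1)%N.
  by have /increasing_seqP := hf; move=> /(_ n); rewrite ltEnat.
exact: leq_ltn_trans.
Qed.

Lemma incr_cvg_oo {f : nat -> nat} : increasing_seq f -> f @ \oo --> \oo.
Proof.
move=> hf P [N _ PN]; exists N => // m /= Nm; apply: PN.
have := incr_ge hf m; rewrite /=; move: Nm; rewrite ?leEnat; exact: leq_trans.
Qed.

Lemma subseq_cvg {T : topologicalType} (u : nat -> T) (l : T) {f : nat -> nat} :
  increasing_seq f -> u @ \oo --> l -> (u \o f) @ \oo --> l.
Proof. move=> hf hu; exact: cvg_comp (incr_cvg_oo hf) hu. Qed.

Lemma incr_comp {f g : nat -> nat} : increasing_seq f -> increasing_seq g ->
  increasing_seq (f \o g).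
Proof. by move=> hf hg n m /=; rewrite hf -leEnat hg. Qed.

Lemma multi_bw (R : realType) (I : eqType) (s : seq I) (u : I -> nat -> R) :
  (forall i k, `|u i k| <= 1) ->
  exists2 f : nat -> nat, increasing_seq f & forall i, i \in s -> cvgn (u i \o f).
Proof.
move=> hb; elim: s => [|i s [f hf IH]].
  by exists id => // n m.
have bd : bounded_fun (u i \o f).
  exists 1; split => // M M1 x _ /=; exact: le_trans (hb _ _) (ltW M1).
have [g hg cg] := bolzano_weierstrass bd.
exists (f \o g); first exact: incr_comp.
move=> j; rewrite inE => /orP [/eqP -> | js]; first exact: cg.
apply: cvgP; exact: (subseq_cvg _ _ hg (IH j js)).
Qed.

Section MxCvg.
Variables (R : realType) (T : Type) (F : set_system T).
Context {FF : Filter F}.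

Lemma mx_cvg_entry m n (M : T -> 'M[R]_(m, n)) (L : 'M[R]_(m, n)) i j :
  M @ F --> L -> (fun t => M t i j) @ F --> L i j.
Proof. move=> h; exact: (continuous_cvg _ (@coord_continuous R m n i j _) h). Qed.

Lemma entry_mx_cvg m n (M : T -> 'M[R]_(m, n)) (L : 'M[R]_(m, n)) :
  (forall i j, (fun t => M t i j) @ F --> L i j) -> M @ F --> L.
Proof.
move=> h; apply/cvg_mx_entourageP => A entA.
apply: (@filter_forall T _ (fun i t => forall j, (L i j, M t i j) \in A) F FF) => i.
have := @filter_forall T 'I_n (fun j t => (L i j, M t i j) \in A) F FF; apply => j.
have := (cvg_entourageP _ _).1 (h i j) A entA.
move=> H; near=> t; rewrite inE; near: t; exact: H.
Unshelve. all: by end_near.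
Qed.

Lemma cvg_sumr (I : eqType) (r : seq I) (V : normedModType R)
   (G : I -> T -> V) (g : I -> V) :
  (forall l, G l @ F --> g l) ->
  (fun t => \sum_(l <- r) G l t) @ F --> \sum_(l <- r) g l.
Proof.
move=> h; apply: (@cvg_big V I +%R 0 xpredT add_continuous T F r G g FF) => l _.
exact: h.
Qed.

Lemma cvg_mulmx m n k (M : T -> 'M[R]_(m, n)) (N : T -> 'M[R]_(n, k)) (L : 'M[R]_(m, n)) (K : 'M[R]_(n, k)) :
  M @ F --> L -> N @ F --> K -> (fun t => M t *m N t) @ F --> L *m K.
Proof.
move=> hM hN; apply: entry_mx_cvg => i j.
under eq_cvg do rewrite mxE.
rewrite mxE; apply: cvg_sumr => l.
apply: cvgM; [exact: mx_cvg_entry | exact: mx_cvg_entry].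
Qed.

Lemma cvg_trmx m n (M : T -> 'M[R]_(m, n)) (L : 'M[R]_(m, n)) :
  M @ F --> L -> (fun t => (M t)^T) @ F --> L^T.
Proof.
move=> hM; apply: entry_mx_cvg => i j.
under eq_cvg do rewrite mxE.
rewrite mxE; exact: mx_cvg_entry.
Qed.

Lemma cvg_diag n (d : T -> 'rV[R]_n) (L : 'rV[R]_n) :
  (forall i, (fun t => d t 0 i) @ F --> L 0 i) ->
  (fun t => diag_mx (d t)) @ F --> diag_mx L.
Proof.
move=> hd; apply: entry_mx_cvg => i j.
under eq_cvg do rewrite mxE.
rewrite mxE; apply: cvgMn; exact: hd.
Qed.

End MxCvg.

Lemma feas_facts (R : realType) (eps y z : R) : 0 < eps ->
  psi_eps eps y z = 0 ->
  [/\ 0 < y, 0 < z, Num.sqrt (y ^+ 2 + z ^+ 2 + 2 * eps ^+ 2) = y + z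
    & y * z = eps ^+ 2].
Proof.
rewrite /psi_eps => e0 /eqP; rewrite subr_eq0 => /eqP hs.
have hge : 0 <= y ^+ 2 + z ^+ 2 + 2 * eps ^+ 2.
  by apply: addr_ge0; [apply: addr_ge0|apply: mulr_ge0]; rewrite ?sqr_ge0.
have hsq := sqr_sqrtr hge.
have s0 : 0 <= y + z by rewrite hs sqrtr_ge0.
rewrite -hs in hsq.
have yz : y * z = eps ^+ 2 by nra.
have e2 : 0 < eps ^+ 2 by rewrite exprn_gt0.
have hy : 0 < y by nra.
have hz : 0 < z by nra.
by split => //; rewrite hs.
Qed.

Lemma lim_uniq (R : realType) (V : normedModType R) (u : nat -> V) (a b : V) :
  u @ \oo --> a -> u @ \oo --> b -> a = b.
Proof. move=> ha hb; exact: (cvg_unique _ ha hb). Qed.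

Lemma lim_ge0 (R : realType) (u : nat -> R) (l : R) :
  (forall k, 0 <= u k) -> u @ \oo --> l -> 0 <= l.
Proof.
move=> h hl.
have hn : \forall k \near \oo, [set x : R | 0 <= x] (u k) by apply: nearW => k; exact: h.
exact: (closed_cvg _ (@closed_ge R 0) hn l hl).
Qed.

Lemma quad_entry (R : realType) m n (M : 'M[R]_(m, n)) (d : 'rV[R]_m) a b :
  (M^T *m diag_mx d *m M) a b = \sum_i d 0 i * (M i a * M i b).
Proof.
rewrite mul_mx_diag !mxE; apply: eq_bigr => i _; rewrite !mxE; ring.
Qed.

Lemma quad1_entry (R : realType) m n (M : 'M[R]_(m, n)) a b :
  (M^T *m M) a b = \sum_i (M i a * M i b).
Proof. by rewrite !mxE; apply: eq_bigr => i _; rewrite !mxE. Qed.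

Arguments mx_cvg_entry {R T F FF m n M L} i j _.
Arguments entry_mx_cvg {R T F FF m n M L} _.
Arguments cvg_sumr {R T F FF I r V G g} _.
Arguments cvg_mulmx {R T F FF m n k M N L K} _ _.
Arguments cvg_trmx {R T F FF m n M L} _.
Arguments cvg_diag {R T F FF n d L} _.
Arguments lim_uniq {R V u a b} _ _.
Arguments lim_ge0 {R u l} _ _.

Theorem theorem4p2 (R : realType) (n q p : nat)
    (f : 'cV[R]_n -> R) (A : 'M[R]_(q, n)) (b : 'cV[R]_q)
    (c : 'I_p -> 'cV[R]_n -> R)
    (xe : R -> 'cV[R]_n) (yEe : R -> 'cV[R]_q) (yIe zIe : R -> 'cV[R]_p)
    (lame : R -> 'cV[R]_n)
    (xs : 'cV[R]_n) (yEs : 'cV[R]_q) (yIs zIs : 'cV[R]_p) (lams : 'cV[R]_n) :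
  C1 f ->
  (forall i, concave (c i) /\ C2 (c i)) ->
  (forall eps : R, 0 < eps ->
     stationary_P eps f A b c (xe eps) (yEe eps) (yIe eps) (zIe eps) (lame eps)) ->
  (* (xs, (yEs, yIs), zIs, lams) is a point of the outer limit (limsup) as eps \searrow 0 *)
  (exists e : nat -> R, (forall k, 0 < e k) /\ e @ \oo --> (0 : R) /\
     (xe \o e) @ \oo --> xs /\ (yEe \o e) @ \oo --> yEs /\
     (yIe \o e) @ \oo --> yIs /\ (zIe \o e) @ \oo --> zIs /\
     (lame \o e) @ \oo --> lams) ->
  let beta := [set i : 'I_p | (yIs i 0 == 0) && (zIs i 0 == 0)]%SET in
  let gamma := [set i : 'I_p | (0 < yIs i 0) && (zIs i 0 == 0)]%SET in
  exists eta : 'rV[R]_#|beta|,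
    (forall k, 0 <= eta 0 k <= 1) /\
    grad f xs + (\sum_(j < p) yIs j 0 *: hess (c j) xs - A^T *m A
                 - (subJac gamma c xs)^T *m subJac gamma c xs
                 - (subJac beta c xs)^T *m diag_mx eta *m subJac beta c xs) *m lams = 0.
Proof.
move=> Cf Hc Hst [e [ep [e0 [cx [cyE [cyI [czI cl]]]]]]] beta gamma.
have feas k i : [/\ 0 < yIe (e k) i 0, 0 < zIe (e k) i 0,
    Num.sqrt (yIe (e k) i 0 ^+ 2 + zIe (e k) i 0 ^+ 2 + 2 * e k ^+ 2) =
      yIe (e k) i 0 + zIe (e k) i 0
    & yIe (e k) i 0 * zIe (e k) i 0 = e k ^+ 2].
  apply: feas_facts => //.
  have := (Hst _ (ep k)).1.2; rewrite /in_Theta => /(congr1 (fun M : 'cV[R]_p => M i 0)).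
  by rewrite !mxE.
pose d k i := 1 - zIe (e k) i 0 /
   Num.sqrt (yIe (e k) i 0 ^+ 2 + zIe (e k) i 0 ^+ 2 + 2 * e k ^+ 2).
have dE k i : d k i = 1 - zIe (e k) i 0 / (yIe (e k) i 0 + zIe (e k) i 0).
  by rewrite /d; case: (feas k i) => _ _ -> _.
have dB k i : 0 <= d k i <= 1.
  case: (feas k i) => hy hz _ _; rewrite dE.
  have hs : 0 < yIe (e k) i 0 + zIe (e k) i 0 by rewrite addr_gt0.
  rewrite subr_ge0 lerBlDr lerDl divr_ge0 ?ltW //= ltr_pdivrMr // mul1r.
  by rewrite ltrDr.
have dN : forall i k, `|d k i| <= 1.
  by move=> i k; case/andP: (dB k i) => h1 h2; rewrite ger0_norm.
have [phi hphi hcv] := @multi_bw R _ (enum 'I_p) (fun i k => d k i) dN.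
pose ds := \row_i lim ((fun k => d (phi k) i) @ \oo).
have hd i : (fun k => d (phi k) i) @ \oo --> ds 0 i.
  by rewrite mxE; apply: (hcv i); rewrite mem_enum.
pose x' k := xe (e (phi k)).
pose yI' k := yIe (e (phi k)).
pose zI' k := zIe (e (phi k)).
pose l' k := lame (e (phi k)).
have cx' : x' @ \oo --> xs := subseq_cvg _ _ hphi cx.
have cyI' : yI' @ \oo --> yIs := subseq_cvg _ _ hphi cyI.
have czI' : zI' @ \oo --> zIs := subseq_cvg _ _ hphi czI.
have cl' : l' @ \oo --> lams := subseq_cvg _ _ hphi cl.
have hgrad : (fun k => grad f (x' k)) @ \oo --> grad f xs.
  apply: entry_mx_cvg => i j; rewrite mxE.
  under eq_cvg do rewrite mxE.
  exact: (continuous_cvg _ (Cf.2 i (xs)) cx').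
have hjac : (fun k => Jac c (x' k)) @ \oo --> Jac c xs.
  apply: entry_mx_cvg => i j; rewrite mxE.
  under eq_cvg do rewrite mxE.
  exact: (continuous_cvg _ ((Hc i).2.1.2 j xs) cx').
have hhess j : (fun k => hess (c j) (x' k)) @ \oo --> hess (c j) xs.
  apply: entry_mx_cvg => a b'; rewrite mxE.
  under eq_cvg do rewrite mxE.
  exact: (continuous_cvg _ (((Hc j).2.2 b').2 a xs) cx').
pose Vs := grad f xs + (\sum_(j < p) yIs j 0 *: hess (c j) xs - A^T *m A
   - (Jac c xs)^T *m diag_mx ds *m Jac c xs) *m lams.
have hV : (fun k => grad f (x' k) + (\sum_(j < p) yI' k j 0 *: hess (c j) (x' k)
   - A^T *m A - (Jac c (x' k))^T *m JzPsi (e (phi k)) (yI' k) (zI' k)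
   *m Jac c (x' k)) *m l' k) @ \oo --> Vs.
  apply: cvgD => //; apply: cvg_mulmx => //.
  apply: cvgB; first apply: cvgB.
  - apply: cvg_sumr => j; apply: cvgZ => //; exact: mx_cvg_entry.
  - exact: cvg_cst.
  - apply: cvg_mulmx => //; apply: cvg_mulmx; first exact: cvg_trmx.
    rewrite /JzPsi; apply: cvg_diag => i.
    under eq_cvg do rewrite mxE.
    exact: hd.
have Vs0 : Vs = 0.
  apply: (lim_uniq hV).
  have -> : (fun k => grad f (x' k) + (\sum_(j < p) yI' k j 0 *: hess (c j) (x' k)
   - A^T *m A - (Jac c (x' k))^T *m JzPsi (e (phi k)) (yI' k) (zI' k)
   *m Jac c (x' k)) *m l' k) = fun _ => 0.
    by apply: funext => k; exact: (Hst _ (ep (phi k))).2.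
  exact: cvg_cst.
have hyi i : (fun k => yI' k i 0) @ \oo --> yIs i 0 := mx_cvg_entry i 0 cyI'.
have hzi i : (fun k => zI' k i 0) @ \oo --> zIs i 0 := mx_cvg_entry i 0 czI'.
have dsB i : 0 <= ds 0 i <= 1.
  apply/andP; split.
    by apply: (lim_ge0 _ (hd i)) => k; case/andP: (dB (phi k) i).
  rewrite -subr_ge0; apply: (@lim_ge0 R (fun k => 1 - d (phi k) i)).
    by move=> k /=; rewrite subr_ge0; case/andP: (dB (phi k) i).
  by apply: cvgB; [exact: cvg_cst | exact: hd].
have ys0 i : 0 <= yIs i 0.
  apply: (@lim_ge0 R (fun k => yI' k i 0)); last exact: hyi.
  by move=> k; case: (feas (phi k) i) => /ltW.
have zs0 i : 0 <= zIs i 0.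
  apply: (@lim_ge0 R (fun k => zI' k i 0)); last exact: hzi.
  by move=> k; case: (feas (phi k) i) => _ /ltW.
have yz0 i : yIs i 0 * zIs i 0 = 0.
  have hm : ((fun k => yI' k i 0) \* (fun k => zI' k i 0)) @ \oo --> yIs i 0 * zIs i 0.
    by apply: cvgM; [exact: hyi | exact: hzi].
  apply: (lim_uniq hm).
  have -> : (fun k => yI' k i 0) \* (fun k => zI' k i 0) = fun k => e (phi k) * e (phi k).
    by apply: funext => k /=; case: (feas (phi k) i) => _ _ _ ->; rewrite expr2.
  have e0' : (fun k => e (phi k)) @ \oo --> (0:R) := subseq_cvg _ _ hphi e0.
  by rewrite -(mulr0 (0:R)); apply: cvgM.
have dlim i : yIs i 0 + zIs i 0 != 0 -> ds 0 i = 1 - zIs i 0 / (yIs i 0 + zIs i 0).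
  move=> hne; apply: (lim_uniq (hd i)).
  have -> : (fun k => d (phi k) i) =
     (fun k => 1 - zI' k i 0 / (yI' k i 0 + zI' k i 0)) by apply: funext => k; rewrite dE.
  apply: cvgB; first exact: cvg_cst.
  apply: cvgM; first exact: hzi.
  apply: cvgV => //; apply: cvgD; [exact: hyi | exact: hzi].
pose eta := \row_(k < #|beta|) ds 0 (enum_val k).
have key : (Jac c xs)^T *m diag_mx ds *m Jac c xs =
  (subJac gamma c xs)^T *m subJac gamma c xs +
  (subJac beta c xs)^T *m diag_mx eta *m subJac beta c xs.
  apply/matrixP => a b'.
  rewrite [in RHS]mxE quad_entry quad1_entry quad_entry.
  have hsub (S : {set 'I_p}) (k : 'I_#|S|) j : subJac S c xs k j = Jac c xs (enum_val k) j.
    by rewrite /subJac [LHS]mxE.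
  have heta k : eta 0 k = ds 0 (enum_val k) by rewrite /eta [LHS]mxE.
  under [X in _ = X + _]eq_bigr do rewrite !hsub.
  under [X in _ = _ + X]eq_bigr do rewrite !hsub heta.
  have E (F : 'I_p -> R) (S : {set 'I_p}) :
      \sum_(k < #|S|) F (enum_val k) = \sum_(i in S) F i by rewrite [RHS]big_enum_val.
  rewrite (E (fun i => Jac c xs i a * Jac c xs i b')).
  rewrite (E (fun i => ds 0 i * (Jac c xs i a * Jac c xs i b'))).
  rewrite [in RHS]big_mkcond [X in _ = _ + X]big_mkcond -big_split /=; apply: eq_bigr => i _.
  have ys := ys0 i; have zs := zs0 i; have yz := yz0 i.
  case: (boolP (i \in beta)) => ib; case: (boolP (i \in gamma)) => ig.
  - move: ib ig; rewrite !inE => /andP [/eqP -> _] /andP [].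
    by rewrite ltxx.
  - by rewrite add0r.
  - move: ig; rewrite inE => /andP [yp /eqP z0].
    rewrite dlim; last by rewrite z0 addr0 gt_eqF.
    by rewrite z0 mul0r subr0 mul1r addr0.
  - have zn : zIs i 0 != 0.
      apply/negP => /eqP z0.
      have [y0|yp] := eqVneq (yIs i 0) 0.
        by move: ib; rewrite inE y0 z0 eqxx.
      move: ig; rewrite inE z0 eqxx andbT.
      by rewrite lt_def yp ys.
    have y0 : yIs i 0 = 0.
      by move/eqP: yz; rewrite mulf_eq0 (negbTE zn) orbF => /eqP.
    rewrite dlim; last by rewrite y0 add0r.
    by rewrite y0 add0r divff // subrr mul0r addr0.
exists eta; split.
  by move=> k; rewrite mxE; exact: dsB.
rewrite -Vs0 /Vs key.
by rewrite opprD addrA.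
Qed.
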